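(* Let $A$ be a metabelian Lie $U$-algebra over a field $k$, with $R=k[x_\alpha:\alpha\in\Lambda]$ as below, and let $M$ be a torsion-free $R$-module. Then every Lie algebra homomorphism $\varphi:A\oplus M\to A$ that is the identity on $A$ maps $M$ into $\mathrm{Fit}(A)$, its restriction $\varphi|_M$ is an $R$-module homomorphism $M\to\mathrm{Fit}(A)$, and $\varphi\mapsto\varphi|_M$ is a bijection between the set $\mathrm{Hom}_A(A\oplus M,A)$ of such homomorphisms and $\mathrm{Hom}_R(M,\mathrm{Fit}(A))$.
   Context: A Lie algebra is metabelian if $(a\circ b)\circ(c\circ d)=0$ identically; $\mathrm{Fit}(A)$ is the ideal generated by all elements lying in nilpotent ideals. A metabelian Lie algebra $A$ is a $U$-algebra if $\mathrm{Fit}(A)$ is abelian and torsion-free as a module over $R=k[x_\alpha:\alpha\in\Lambda]$, where $\{z_\alpha:\alpha\in\Lambda\}\subseteq A$ is a family whose images form a basis of $A/\mathrm{Fit}(A)$ and $b\cdot x_\alpha=b\circ z_\alpha$ for $b\in\mathrm{Fit}(A)$ (extended multiplicatively and linearly). Let $V$ be the $k$-span of $\{z_\alpha\}$. Direct module extension: $A\oplus M$ is the $k$-space $V\oplus\mathrm{Fit}(A)\oplus M$ with bracket: on $V\oplus\mathrm{Fit}(A)$ it is that of $A$; all products between elements of $\mathrm{Fit}(A)\oplus M$ and elements of $M$ (either order) are $0$; $m\circ z_\alpha=m\cdot x_\alpha=-z_\alpha\circ m$ for $m\in M$; extended bilinearly. It is a metabelian Lie algebra containing $A$. *)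

(* Defs.v *)
From HB Require Import structures.
From mathcomp Require Import all_boot all_algebra.
From mathcomp Require Import mpoly.
Set Implicit Arguments. Unset Strict Implicit. Unset Printing Implicit Defensive.
Import GRing.Theory.
Local Open Scope ring_scope.

Section LieDefs.
Variable k : fieldType.

Section Lie.
Variables (A : lmodType k) (br : A -> A -> A).

Definition is_lie_algebra : Prop :=
  [/\ (forall (c : k) a a' b, br (c *: a + a') b = c *: br a b + br a' b),
      (forall (c : k) a b b', br a (c *: b + b') = c *: br a b + br a b'),
      (forall a, br a a = 0) &
      (forall a b c, br (br a b) c + br (br b c) a + br (br c a) b = 0)].

Definition metabelian : Prop :=
  forall a b c d, br (br a b) (br c d) = 0.

Definition ideal (I : A -> Prop) : Prop :=
  [/\ I 0, (forall (c : k) a b, I a -> I b -> I (c *: a + b)) &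
      (forall a b, I a -> I (br a b))].

Definition lbr (a : A) (s : seq A) : A := foldl br a s.

(* I is a nilpotent ideal: I^(n+1) = 0 for some n, where I^(n+1) is spanned
   by the left-normed brackets of n+1 elements of I *)
Definition nilpotent_ideal (I : A -> Prop) : Prop :=
  ideal I /\ exists n : nat, forall a s, size s = n -> I a ->
      (forall b, b \in s -> I b) -> lbr a s = 0.
End Lie.

(* Fit(A): the ideal generated by all elements lying in nilpotent ideals,
   i.e. the smallest ideal containing them *)
Definition Fit (A : lmodType k) (br : A -> A -> A) (x : A) : Prop :=
  forall J : A -> Prop, ideal br J ->
    (forall I y, nilpotent_ideal br I -> I y -> J y) -> J x.

(* An R-module structure on a k-space V is given by pairwise commuting
   k-linear operators X alpha (action of x_alpha).  Every element of R is a
   polynomial in finitely many variables x_(f 0), ..., x_(f (n-1)); we let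
   q : {mpoly k[n]} act through f : 'I_n -> Lam. *)
Section Poly.
Variables (Lam : eqType) (V : lmodType k) (X : Lam -> V -> V).

Definition R_module_str : Prop :=
  (forall al (c : k) v w, X al (c *: v + w) = c *: X al v + X al w) /\
  (forall al be v, X al (X be v) = X be (X al v)).

Definition monact n (f : 'I_n -> Lam) (mo : 'X_{1..n}) (v : V) : V :=
  foldr (fun i w => iter (mo i) (X (f i)) w) v (enum 'I_n).

Definition polyact n (f : 'I_n -> Lam) (q : {mpoly k[n]}) (v : V) : V :=
  \sum_(mo <- msupp q) q@_mo *: monact f mo v.

(* torsion-free: m . p = 0 with p a nonzero element of R forces m = 0
   (f injective, so that q <> 0 means the element of R is nonzero) *)
Definition R_torsion_free : Prop :=
  forall n (f : 'I_n -> Lam), injective f ->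
    forall q : {mpoly k[n]}, q != 0 -> forall v, polyact f q v = 0 -> v = 0.
End Poly.

Definition R_hom (Lam : eqType) (V W : lmodType k)
    (XV : Lam -> V -> V) (XW : Lam -> W -> W) (psi : V -> W) : Prop :=
  (forall (c : k) v w, psi (c *: v + w) = c *: psi v + psi w) /\
  (forall n (f : 'I_n -> Lam) (q : {mpoly k[n]}) v,
      psi (polyact XV f q v) = polyact XW f q (psi v)).

Section U.
Variables (A : lmodType k) (br : A -> A -> A) (Lam : eqType) (z : Lam -> A).

(* module structure of Fit(A): b . x_alpha = b o z_alpha *)
Definition XFit (al : Lam) (b : A) : A := br b (z al).

(* the images of the z_alpha form a basis of A / Fit(A) *)
Definition basis_mod_Fit : Prop :=
  (forall a, exists (s : seq Lam) (c : Lam -> k),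
       Fit br (a - \sum_(al <- s) c al *: z al)) /\
  (forall (s : seq Lam) (c : Lam -> k), uniq s ->
       Fit br (\sum_(al <- s) c al *: z al) -> forall al, al \in s -> c al = 0).

Definition Fit_torsion_free : Prop :=
  forall n (f : 'I_n -> Lam), injective f ->
    forall q : {mpoly k[n]}, q != 0 ->
      forall b, Fit br b -> polyact XFit f q b = 0 -> b = 0.

Definition U_algebra : Prop :=
  [/\ is_lie_algebra br, metabelian br,
      (forall a b, Fit br a -> Fit br b -> br a b = 0),
      basis_mod_Fit & Fit_torsion_free].

Variables (M : lmodType k) (X : Lam -> M -> M).

(* rho a m = m o a: the action of A on M, determined (A = V (+) Fit(A)) by
   bilinearity, m o z_alpha = m . x_alpha and m o Fit(A) = 0 *)
Definition ext_action (rho : A -> M -> M) : Prop :=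
  [/\ (forall (c : k) a a' m, rho (c *: a + a') m = c *: rho a m + rho a' m),
      (forall (c : k) a m m', rho a (c *: m + m') = c *: rho a m + rho a m'),
      (forall al m, rho (z al) m = X al m) &
      (forall b m, Fit br b -> rho b m = 0)].

Definition ext_br (rho : A -> M -> M) (p q : A * M) : A * M :=
  (br p.1 q.1, rho q.1 p.2 - rho p.1 q.2).

Definition HomA (rho : A -> M -> M) (phi : A * M -> A) : Prop :=
  [/\ (forall (c : k) a a' m m',
         phi (c *: a + a', c *: m + m') = c *: phi (a, m) + phi (a', m')),
      (forall p q, phi (ext_br rho p q) = br (phi p) (phi q)) &
      (forall a, phi (a, 0) = a)].

Definition HomR_M_Fit (psi : M -> A) : Prop :=
  (forall m, Fit br (psi m)) /\ R_hom X XFit psi.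
End U.
End LieDefs.

(* Main.v *)
Require Import Defs.
From HB Require Import structures.
From mathcomp Require Import all_boot all_algebra.
From mathcomp Require Import mpoly.
From Stdlib Require Import Classical.
Set Implicit Arguments. Unset Strict Implicit. Unset Printing Implicit Defensive.
Import GRing.Theory.
Local Open Scope ring_scope.

Lemma xxx0 (k : fieldType) (A : lmodType k) (x : A) : x = x + x -> x = 0.
Proof. by move=> h; apply: (@addrI _ x); rewrite addr0 -h. Qed.

Section LieL.
Variables (k : fieldType) (A : lmodType k) (br : A -> A -> A).
Hypothesis hL : is_lie_algebra br.

Lemma br0l b : br 0 b = 0.
Proof.
case: hL => l _ _ _; apply: xxx0; have := l 1 0 0 b; rewrite !scale1r !addr0; apply.
Qed.
Lemma br0r b : br b 0 = 0.
Proof.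
case: hL => _ l _ _; apply: xxx0; have := l 1 b 0 0; rewrite !scale1r !addr0; apply.
Qed.
Lemma brDl a a' b : br (a + a') b = br a b + br a' b.
Proof. case: hL => l _ _ _; have := l 1 a a' b; rewrite !scale1r; apply. Qed.
Lemma brDr a b b' : br a (b + b') = br a b + br a b'.
Proof. case: hL => _ l _ _; have := l 1 a b b'; rewrite !scale1r; apply. Qed.
Lemma brZl c a b : br (c *: a) b = c *: br a b.
Proof. case: hL => l _ _ _; have := l c a 0 b; rewrite !addr0 br0l addr0; apply. Qed.
Lemma brZr c a b : br a (c *: b) = c *: br a b.
Proof. case: hL => _ l _ _; have := l c a b 0; rewrite !addr0 br0r addr0; apply. Qed.
Lemma brNl a b : br (- a) b = - br a b.
Proof. by rewrite -scaleN1r brZl scaleN1r. Qed.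
Lemma brNr a b : br a (- b) = - br a b.
Proof. by rewrite -scaleN1r brZr scaleN1r. Qed.
Lemma brBl a a' b : br (a - a') b = br a b - br a' b.
Proof. by rewrite brDl brNl. Qed.
Lemma brBr a b b' : br a (b - b') = br a b - br a b'.
Proof. by rewrite brDr brNr. Qed.
Lemma brA a b : br a b = - br b a.
Proof.
case: hL => _ _ al _; have := al (a + b).
rewrite brDl !brDr !al add0r addr0 => /eqP; rewrite addr_eq0 => /eqP //.
Qed.
Lemma br_suml (I : Type) (s : seq I) (F : I -> A) b :
  br (\sum_(i <- s) F i) b = \sum_(i <- s) br (F i) b.
Proof. exact: (big_morph (fun a => br a b) (fun x y => brDl x y b) (br0l b)). Qed.
Lemma br_sumr (I : Type) (s : seq I) (F : I -> A) b :
  br b (\sum_(i <- s) F i) = \sum_(i <- s) br b (F i).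
Proof. exact: (big_morph (fun a => br b a) (fun x y => brDr b x y) (br0r b)). Qed.

Lemma Fit_ideal : ideal br (Fit br).
Proof.
split.
- by move=> J [] .
- by move=> c a b ha hb J hJ hI; case: (hJ) => _ h _; apply: h; [apply: ha|apply: hb].
- by move=> a b ha J hJ hI; case: (hJ) => _ _ h; apply: h; apply: ha.
Qed.

Lemma nil_Fit I y : nilpotent_ideal br I -> I y -> Fit br y.
Proof. by move=> hI hy J _ h; exact: h hI hy. Qed.

Hypothesis hM : metabelian br.

Definition Der x := forall J, ideal br J -> (forall a b, J (br a b)) -> J x.

Lemma Der_br c d y : Der y -> br (br c d) y = 0.
Proof.
move=> hy; apply: (hy (fun y => br (br c d) y = 0)) => //.
split.
- exact: br0r.
- by move=> c' a b ha hb; rewrite brDr brZr ha hb scaler0 addr0.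
- by move=> a b _; exact: hM.
Qed.

Lemma Der_ideal : ideal br Der.
Proof.
split.
- by move=> J [].
- by move=> c a b ha hb J hJ hI; case: (hJ) => _ h _; apply: h; [apply: ha|apply: hb].
- by move=> a b ha J hJ hI; apply: hI.
Qed.

Lemma br_Fit a b : Fit br (br a b).
Proof.
apply: (@nil_Fit Der); last by move=> J _ h; apply: h.
split; first exact: Der_ideal.
exists 1%N => x [|y [|? ?]] // _ hx hb /=.
have hy : Der y by apply: hb; rewrite inE.
move: y hy {hb}; apply: (hx (fun x => forall y, Der y -> br x y = 0)).
- split.
  + by move=> y _; exact: br0l.
  + by move=> c' a' b' ha hb y hy; rewrite brDl brZl ha // hb // scaler0 addr0.
  + by move=> a' b' _ y hy; exact: Der_br.
- by move=> c d y hy; exact: Der_br.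
Qed.

Lemma Fit_zero : (forall b, Fit br b -> b = 0) -> forall x, Fit br x.
Proof.
move=> h0 x; apply: (@nil_Fit (fun _ => True)) => //.
split; first by split.
by exists 1%N => a [|y [|? ?]] // _ _ _ /=; apply: h0; exact: br_Fit.
Qed.
End LieL.


Section PolyL.
Variables (k : fieldType) (Lam : eqType) (V : lmodType k) (Y : Lam -> V -> V).

Lemma monact_U n (f : 'I_n -> Lam) (i : 'I_n) v : monact Y f U_(i)%MM v = Y (f i) v.
Proof.
rewrite /monact.
have : forall r : seq 'I_n, uniq r ->
  foldr (fun j w => iter (U_(i)%MM j) (Y (f j)) w) v r = if i \in r then Y (f i) v else v.
  elim=> [|j r IH] //= /andP [jr ur]; rewrite IH // mnm1E in_cons.
  case: eqP => [e|_] /=; last by [].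
  by subst j; rewrite (negbTE jr).
by move=> ->; rewrite ?enum_uniq // mem_enum.
Qed.

Lemma polyact_sup n (f : 'I_n -> Lam) (q : {mpoly k[n]}) v (s : seq 'X_{1..n}) :
  uniq s -> {subset msupp q <= s} ->
  polyact Y f q v = \sum_(mo <- s) q@_mo *: monact Y f mo v.
Proof.
move=> us sub; rewrite /polyact [RHS](bigID (fun mo => mo \in msupp q)) /=.
rewrite [X in _ = _ + X]big1 ?addr0; last first.
  by move=> mo; rewrite -mcoeff_eq0 => /eqP ->; rewrite scale0r.
rewrite -[RHS]big_filter; apply: perm_big; apply: uniq_perm.
- exact: msupp_uniq.
- exact: filter_uniq.
- by move=> mo; rewrite mem_filter; case: (boolP (mo \in msupp q)) => // /sub ->.
Qed.

Lemma polyact_X n (f : 'I_n -> Lam) (i : 'I_n) v :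
  polyact Y f ('X_i : {mpoly k[n]}) v = Y (f i) v.
Proof.
by rewrite /polyact msuppX big_seq1 mcoeffX eqxx scale1r monact_U.
Qed.

Lemma mnm1_inj n : injective (fun i : 'I_n => U_(i)%MM).
Proof.
move=> i j /(congr1 (fun m : 'X_{1..n} => m j)); rewrite !mnm1E eqxx.
by move/eqP; rewrite eqb1 => /eqP.
Qed.

Lemma mcoeff_lin n (c : 'I_n -> k) (mo : 'X_{1..n}) :
  (\sum_i c i *: ('X_i : {mpoly k[n]}))@_mo = \sum_i c i * (U_(i)%MM == mo)%:R.
Proof.
rewrite raddf_sum; apply: eq_bigr => i _; by rewrite /= mcoeffZ mcoeffX.
Qed.

Lemma mcoeff_linU n (c : 'I_n -> k) j :
  (\sum_i c i *: ('X_i : {mpoly k[n]}))@_U_(j) = c j.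
Proof.
rewrite mcoeff_lin (bigD1 j) //= eqxx mulr1 big1 ?addr0 // => i ij.
by rewrite (inj_eq (@mnm1_inj n)) (negbTE ij) mulr0.
Qed.

Lemma polyact_lin n (f : 'I_n -> Lam) (c : 'I_n -> k) v :
  polyact Y f (\sum_i c i *: ('X_i : {mpoly k[n]})) v = \sum_i c i *: Y (f i) v.
Proof.
rewrite (@polyact_sup _ _ _ _ [seq U_(i)%MM | i <- enum 'I_n]).
- rewrite big_map big_enum /=; apply: eq_bigr => i _.
  by rewrite mcoeff_linU monact_U.
- by rewrite map_inj_uniq ?enum_uniq //; exact: mnm1_inj.
- move=> mo; rewrite mcoeff_msupp mcoeff_lin; apply: contraR => hn.
  rewrite big1 // => i _; case: eqP => [e|_]; last by rewrite mulr0.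
  by move: hn; rewrite -e map_f // mem_enum.
Qed.
End PolyL.

Section Comm.
Variables (k : fieldType) (Lam : eqType) (V W : lmodType k) (Y : Lam -> V -> V)
  (Z : Lam -> W -> W) (g : V -> W).
Hypothesis gL : forall (c : k) v w, g (c *: v + w) = c *: g v + g w.
Hypothesis gC : forall al v, g (Y al v) = Z al (g v).

Lemma g0 : g 0 = 0.
Proof. apply: xxx0; have := gL 1 0 0; rewrite scale1r addr0 scale1r; apply. Qed.
Lemma gD v w : g (v + w) = g v + g w.
Proof. by have := gL 1 v w; rewrite !scale1r. Qed.
Lemma gZ c v : g (c *: v) = c *: g v.
Proof. by have := gL c v 0; rewrite !addr0 g0 addr0. Qed.

Lemma g_polyact n (f : 'I_n -> Lam) q v :
  g (polyact Y f q v) = polyact Z f q (g v).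
Proof.
rewrite /polyact (big_morph g gD g0); apply: eq_bigr => mo _; rewrite gZ; congr (_ *: _).
rewrite /monact; elim: (enum 'I_n) => [|j r IH] //=.
by elim: (mo j) => [|t IHt] //=; rewrite gC IHt.
Qed.
End Comm.


Theorem lemma4p3p7 (k : fieldType) (A : lmodType k) (br : A -> A -> A)
    (Lam : eqType) (z : Lam -> A) (M : lmodType k) (X : Lam -> M -> M)
    (rho : A -> M -> M) :
  U_algebra br z ->
  R_module_str X -> R_torsion_free X ->
  ext_action br z X rho ->
  (forall phi : A * M -> A, HomA br rho phi ->
     HomR_M_Fit br z X (fun m => phi (0, m))) /\
  (forall phi1 phi2 : A * M -> A, HomA br rho phi1 -> HomA br rho phi2 ->
     (forall m, phi1 (0, m) = phi2 (0, m)) -> forall p, phi1 p = phi2 p) /\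
  (forall psi : M -> A, HomR_M_Fit br z X psi ->
     exists2 phi : A * M -> A, HomA br rho phi & forall m, phi (0, m) = psi m).
Proof.
case=> hL hM hFF [hB1 hB2] hTF [XL XC] _ [rL rR rZ rF].
have rho0l m : rho 0 m = 0.
  by apply: xxx0; have := rL 1 0 0 m; rewrite scale1r addr0 scale1r; apply.
have rho0r a : rho a 0 = 0.
  by apply: xxx0; have := rR 1 a 0 0; rewrite scale1r addr0 scale1r; apply.
have rhoDl a a' m : rho (a + a') m = rho a m + rho a' m.
  by have := rL 1 a a' m; rewrite !scale1r; apply.
have rhoZl c a m : rho (c *: a) m = c *: rho a m.
  by have := rL c a 0 m; rewrite !addr0 rho0l addr0; apply.
have rho_sum (s : seq Lam) (c : Lam -> k) m :
    rho (\sum_(al <- s) c al *: z al) m = \sum_(al <- s) c al *: X al m.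
  rewrite (big_morph (fun a => rho a m) (fun x y => rhoDl x y m) (rho0l m)).
  by apply: eq_bigr => al _; rewrite rhoZl rZ.
have phi_split phi : HomA br rho phi -> forall a m, phi (a, m) = a + phi (0, m).
  by case=> pL _ pI a m; have := pL 1 a 0 0 m; rewrite !scale1r addr0 add0r pI; apply.
have phi_lin phi : HomA br rho phi ->
    forall c m m', phi (0, c *: m + m') = c *: phi (0, m) + phi (0, m').
  by case=> pL _ _ c m m'; have := pL c 0 0 m m'; rewrite scaler0 addr0; apply.
have phi_rho phi : HomA br rho phi -> forall a m, phi (0, rho a m) = br (phi (0, m)) a.
  move=> hp a m; case: (hp) => _ pB pI; have := pB (0, m) (a, 0).
  by rewrite /ext_br /= br0l // rho0r subr0 pI; apply.
split.
  move=> phi hp; set psi := fun m => phi (0, m).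
  have psiC al m : psi (X al m) = XFit br z al (psi m) by rewrite /psi -rZ phi_rho.
  split; last first.
    split; first exact: phi_lin.
    by move=> n f q v; exact: (g_polyact (phi_lin _ hp) psiC).
  move=> m.
  case: (classic (exists b, Fit br b /\ b <> 0)) => [[b [fb nb]]|nob]; last first.
    apply: (Fit_zero hL hM) => b fb; apply: NNPP => nb; apply: nob; by exists b.
  have [s [c hf]] := hB1 (psi m).
  pose t := undup s; pose c' := fun al => c al *+ count_mem al s.
  have e1 : \sum_(al <- s) c al *: z al = \sum_(al <- t) c' al *: z al.
    rewrite -big_undup_iterop_count; apply: eq_bigr => al _; rewrite Monoid.iteropE /c' -scalerMnl.
    by elim: (count_mem al s) => [|n IH] //=; rewrite IH mulrS.
  pose f := tnth (in_tuple t).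
  pose v := \sum_(i < size t) c' (f i) *: z (f i).
  have e2 : \sum_(al <- t) c' al *: z al = v by rewrite big_tnth.
  rewrite e1 e2 in hf.
  have kil b' : Fit br b' -> br v b' = 0.
    move=> fb'; have -> : v = psi m - (psi m - v) by rewrite opprB addrC subrK.
    rewrite brBl // (hFF _ _ hf fb') subr0 /psi -phi_rho // rF //.
    by case: hp => _ _ ->.
  have inj : injective f by apply/tuple_uniqP; exact: undup_uniq.
  have hq := hTF (size t) f inj (\sum_i c' (f i) *: 'X_i).
  have c0 i : c' (f i) = 0.
    case: (eqVneq (\sum_i c' (f i) *: 'X_i : {mpoly k[size t]}) 0) => [e|ne].
      by rewrite -(mcoeff_linU (fun i => c' (f i))) e mcoeff0.
    exfalso; apply: nb; apply: (hq ne b fb).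
    rewrite polyact_lin /XFit.
    have -> : \sum_i c' (f i) *: br b (z (f i)) = br b v.
      by rewrite /v br_sumr //; apply: eq_bigr => j _; rewrite brZr.
    by rewrite (brA hL b v) kil // oppr0.
  have v0 : v = 0 by rewrite /v big1 // => i _; rewrite c0 scale0r.
  by rewrite v0 subr0 in hf.
split.
  by move=> phi1 phi2 h1 h2 e [a m]; rewrite (phi_split _ h1) (phi_split _ h2) e.
move=> psi [psiF [psiL psiP]].
have psiX al m : psi (X al m) = br (psi m) (z al).
  have := psiP 1%N (fun _ => al) 'X_ord0 m; rewrite !polyact_X; apply.
have psi0 : psi 0 = 0 := g0 psiL.
have psiD := gD psiL.
have psiZ := gZ psiL.
have psiB x y : psi (x - y) = psi x - psi y by rewrite psiD -scaleN1r psiZ scaleN1r.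
have psi_rho a m : psi (rho a m) = br (psi m) a.
  have [s [c hf]] := hB1 a.
  rewrite -(subrK (\sum_(al <- s) c al *: z al) a) rhoDl (rF _ _ hf) add0r brDr //.
  rewrite (hFF _ _ (psiF m) hf) add0r rho_sum (big_morph psi psiD psi0) br_sumr //.
  by apply: eq_bigr => al _; rewrite psiZ psiX brZr.
exists (fun p => p.1 + psi p.2); last by move=> m; rewrite add0r.
split.
- by move=> c a a' m m' /=; rewrite psiL scalerDr addrACA.
- move=> [a m] [a' m'] /=; rewrite psiB !psi_rho (brDl hL) !(brDr hL).
  rewrite (hFF _ _ (psiF m) (psiF m')) addr0 (brA hL a (psi m')).
  by rewrite [RHS]addrAC -addrA.
- by move=> a /=; rewrite psi0 addr0.
Qed.
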